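(* Consider $2$ agents with additive, identical, normalized valuation $v$, and no predictions. Consider the online algorithm that allocates each arriving good $g_t$ to agent 1 if $v(A_1)+v(g_t)\le \varphi-1$, where $A_1$ is agent 1's current bundle and $\varphi=\frac{1+\sqrt5}{2}$, and otherwise allocates $g_t$ to agent 2. This algorithm guarantees that the final allocation is $(\varphi-1)$-EFX.
   Context: Online fair division model: goods $g_1,\dots,g_T$ arrive one per time step; the agents have an identical additive normalized valuation $v$ ($v(g_t)\ge0$, $\sum_{t=1}^T v(g_t)=1$, $v(S)=\sum_{g\in S}v(g)$). When $g_t$ arrives, $v(g_t)$ is revealed and $g_t$ must be irrevocably allocated to one agent. For a bundle $S\ne\emptyset$, let $\bar S=S\setminus\{g\}$ with $g\in\arg\max_{g'\in S}v(S\setminus\{g'\})$, and $\bar\emptyset=\emptyset$. For $a\in[0,1]$, an allocation $(A_1,A_2)$ is $a$-EFX if $v(A_i)\ge a\cdot v(\bar A_j)$ for all $i,j$. *)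

(* Defs.v *)
From Stdlib Require Import Reals List Arith.
Import ListNotations.
Open Scope R_scope.

(* Goods are indexed 0..T-1; v t is the value of good g_t.
   Agents are booleans: true = agent 1, false = agent 2. *)

Definition phi : R := (1 + sqrt 5) / 2.

Definition val (v : nat -> R) (S : list nat) : R :=
  fold_right Rplus 0 (map v S).

Definition remove_good (S : list nat) (g : nat) : list nat :=
  filter (fun t => negb (Nat.eqb t g)) S.

(* v(bar S) = max_{g in S} v(S \ {g}) for S nonempty, 0 for S empty *)
Definition val_bar (v : nat -> R) (S : list nat) : R :=
  match S with
  | [] => 0
  | g :: rest =>
      fold_right Rmax (val v (remove_good S g))
                 (map (fun g' => val v (remove_good S g')) rest)
  end.

Definition bundle (T : nat) (alloc : nat -> bool) (i : bool) : list nat :=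
  filter (fun t => Bool.eqb (alloc t) i) (seq 0 T).

Definition is_aEFX (a : R) (v : nat -> R) (T : nat) (alloc : nat -> bool) : Prop :=
  forall i j : bool,
    val v (bundle T alloc i) >= a * val_bar v (bundle T alloc j).

(* The algorithm: load1 n = v(A_1) after goods g_0..g_{n-1} have been allocated. *)
Fixpoint load1 (v : nat -> R) (n : nat) : R :=
  match n with
  | O => 0
  | S m => if Rle_dec (load1 v m + v m) (phi - 1)
           then load1 v m + v m else load1 v m
  end.

Definition alg (v : nat -> R) (t : nat) : bool :=
  if Rle_dec (load1 v t + v t) (phi - 1) then true else false.

(* Main.v *)
Require Import Defs.
From Stdlib Require Import Reals List Arith Lra Lia Psatz.
Import ListNotations.
Open Scope R_scope.

Lemma val_cons v a l : val v (a :: l) = v a + val v l.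
Proof. reflexivity. Qed.

Lemma val_nil v : val v [] = 0.
Proof. reflexivity. Qed.

Lemma val_app v l1 l2 : val v (l1 ++ l2) = val v l1 + val v l2.
Proof.
  induction l1 as [|a l IH]; simpl app.
  - rewrite val_nil; ring.
  - rewrite !val_cons, IH; ring.
Qed.

Lemma remove_notin g s : ~ In g s -> remove_good s g = s.
Proof.
  induction s as [|a s IH]; intro H; [reflexivity|].
  unfold remove_good; simpl.
  destruct (Nat.eqb a g) eqn:E.
  - apply Nat.eqb_eq in E; subst; exfalso; apply H; left; reflexivity.
  - simpl. f_equal. apply IH. intro; apply H; right; auto.
Qed.

Lemma val_remove v S g : NoDup S -> In g S -> val v S = v g + val v (remove_good S g).
Proof.
  induction S as [|a s IH]; intros HN Hin; [destruct Hin|].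
  inversion HN as [|a' s' Hna HNs]; subst.
  unfold remove_good; simpl.
  destruct (Nat.eqb a g) eqn:E.
  - apply Nat.eqb_eq in E; subst. simpl.
    change (filter (fun t => negb (t =? g)%nat) s) with (remove_good s g).
    rewrite remove_notin by auto. rewrite val_cons; ring.
  - simpl. rewrite !val_cons.
    change (filter (fun t => negb (t =? g)%nat) s) with (remove_good s g).
    destruct Hin as [->|Hin]; [rewrite Nat.eqb_refl in E; discriminate|].
    rewrite (IH HNs Hin); ring.
Qed.

Lemma val_nonneg v S : (forall x, In x S -> 0 <= v x) -> 0 <= val v S.
Proof.
  induction S as [|a s IH]; intro H; [rewrite val_nil; lra|].
  rewrite val_cons.
  assert (0 <= v a) by (apply H; left; auto).
  assert (0 <= val v s) by (apply IH; intros; apply H; right; auto).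
  lra.
Qed.

Lemma val_ge_elem v S g : (forall x, In x S -> 0 <= v x) -> In g S -> v g <= val v S.
Proof.
  induction S as [|a s IH]; intros H Hin; [destruct Hin|].
  rewrite val_cons.
  assert (0 <= v a) by (apply H; left; auto).
  assert (0 <= val v s) by (apply val_nonneg; intros; apply H; right; auto).
  destruct Hin as [->|Hin]; [lra|].
  assert (v g <= val v s) by (apply IH; auto; intros; apply H; right; auto).
  lra.
Qed.

Lemma fold_max_bound c X l init :
  c * init <= X -> (forall y, In y l -> c * y <= X) -> 0 <= c ->
  c * fold_right Rmax init l <= X.
Proof.
  induction l as [|a l IH]; intros H0 H Hc; simpl; [auto|].
  unfold Rmax at 1; destruct Rle_dec.
  - apply IH; auto; intros; apply H; right; auto.
  - apply H; left; auto.
Qed.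

Lemma bar_bound v c X S : 0 <= c -> 0 <= X ->
  (forall g, In g S -> c * val v (remove_good S g) <= X) -> c * val_bar v S <= X.
Proof.
  intros Hc HX H. destruct S as [|a s]; simpl val_bar.
  - lra.
  - apply fold_max_bound; auto.
    + apply H; left; auto.
    + intros y Hy. apply in_map_iff in Hy. destruct Hy as [g [<- Hg]].
      apply H; right; auto.
Qed.

Lemma c_nonneg : 0 <= phi - 1.
Proof.
  unfold phi. assert (1 <= sqrt 5).
  { rewrite <- sqrt_1. apply sqrt_le_1_alt. lra. }
  lra.
Qed.

Lemma load_le' v n : load1 v n <= phi - 1.
Proof.
  induction n; simpl; [apply c_nonneg|]. destruct Rle_dec; auto.
Qed.

Lemma bundle_load v n : val v (bundle n (alg v) true) = load1 v n.
Proof.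
  induction n as [|n IH]; [reflexivity|].
  unfold bundle. rewrite seq_S, filter_app, val_app.
  fold (bundle n (alg v) true). rewrite IH. simpl.
  unfold alg. destruct Rle_dec; simpl; rewrite ?val_cons, ?val_nil; ring.
Qed.

Lemma bundle_sum v a l :
  val v (filter (fun t => Bool.eqb (a t) true) l) +
  val v (filter (fun t => Bool.eqb (a t) false) l) = val v l.
Proof.
  induction l as [|x l IH]; simpl; [rewrite val_nil; ring|].
  destruct (a x); simpl; rewrite !val_cons, <- IH; ring.
Qed.

Theorem theorem3p2 :
  forall (T : nat) (v : nat -> R),
    (forall t, (t < T)%nat -> 0 <= v t) ->
    val v (seq 0 T) = 1 ->
    is_aEFX (phi - 1) v T (alg v).
Proof.
  intros T v Hv H1.
  assert (Hs : 0 <= sqrt 5) by apply sqrt_pos.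
  assert (Hs2 : sqrt 5 * sqrt 5 = 5) by (apply sqrt_sqrt; lra).
  assert (Hc0 : 0 < phi - 1) by (unfold phi; nra).
  assert (Hc1 : phi - 1 < 1) by (unfold phi; nra).
  assert (Hcc : (phi - 1) * (phi - 1) = 1 - (phi - 1)) by (unfold phi; nra).
  set (c := phi - 1) in *.
  assert (Hstep : forall m, (m < T)%nat -> load1 v m <= load1 v (S m)).
  { intros m Hm. simpl. destruct Rle_dec; [|lra]. pose proof (Hv m Hm); lra. }
  assert (Hmono : forall n m, (n <= m <= T)%nat -> load1 v n <= load1 v m).
  { intros n m. induction m as [|m IH]; intros Hnm.
    - assert (n = O) by lia. subst; lra.
    - destruct (Nat.eq_dec n (S m)) as [->|Hne]; [lra|].
      pose proof (Hstep m ltac:(lia)). assert (load1 v n <= load1 v m) by (apply IH; lia). lra. }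
  set (x := load1 v T).
  assert (Hx0 : 0 <= x) by (apply (Hmono O T); lia).
  assert (HxC : x <= c) by apply load_le'.
  assert (HA1 : val v (bundle T (alg v) true) = x) by apply bundle_load.
  assert (HA2 : val v (bundle T (alg v) false) = 1 - x).
  { rewrite <- H1, <- (bundle_sum v (alg v) (seq 0 T)). fold (bundle T (alg v) true).
    rewrite HA1. unfold bundle. ring. }
  assert (Hmem : forall i g, In g (bundle T (alg v) i) -> (g < T)%nat /\ alg v g = i).
  { intros i g Hg. unfold bundle in Hg. apply filter_In in Hg. destruct Hg as [Hg He].
    apply in_seq in Hg. split; [lia|]. apply Bool.eqb_prop in He; auto. }
  assert (Hnn : forall i g, In g (bundle T (alg v) i) -> 0 <= v g).
  { intros i g Hg. apply Hv. apply (Hmem i g Hg). }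
  assert (Hbig : forall g, In g (bundle T (alg v) false) -> v g > c - x).
  { intros g Hg. destruct (Hmem false g Hg) as [Hlt Ha].
    unfold alg in Ha. destruct Rle_dec as [|Hn]; [discriminate|].
    assert (load1 v g <= x) by (apply Hmono; lia). fold c in Hn. lra. }
  intros i j. apply Rle_ge. apply bar_bound; [lra| |].
  - destruct i; [rewrite HA1|rewrite HA2]; lra.
  - intros g Hg.
    assert (HN : NoDup (bundle T (alg v) j)).
    { unfold bundle. apply NoDup_filter, seq_NoDup. }
    pose proof (val_remove v _ g HN Hg) as Hr.
    assert (Hrm : forall y, In y (remove_good (bundle T (alg v) j) g) -> In y (bundle T (alg v) j)).
    { intros y Hy. unfold remove_good in Hy. apply filter_In in Hy. tauto. }
    assert (Hr0 : 0 <= val v (remove_good (bundle T (alg v) j) g)).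
    { apply val_nonneg. intros y Hy. apply (Hnn j). auto. }
    pose proof (Hnn j g Hg) as Hg0.
    destruct i, j.
    + rewrite HA1 in *. nra.
    + rewrite HA1 in *. rewrite HA2 in Hr.
      pose proof (Hbig g Hg) as Hgb.
      destruct (remove_good (bundle T (alg v) false) g) as [|g2 l] eqn:E.
      * rewrite val_nil. lra.
      * assert (Hin2 : In g2 (bundle T (alg v) false)) by (apply Hrm; left; auto).
        assert (v g2 <= val v (g2 :: l)).
        { apply val_ge_elem; [|left; auto]. intros y Hy. apply (Hnn false). auto. }
        pose proof (Hbig g2 Hin2).
        set (r := val v (g2 :: l)) in *.
        assert (r < 1 - c) by lra.
        assert (x > 2 * c - 1) by lra.
        nra.
    + rewrite HA2. rewrite HA1 in Hr. nra.
    + rewrite HA2 in *. nra.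
Qed.
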